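(* Let $q$ be such that the Jost solutions exist and let $\Phi^\pm=[\phi_1^\pm,\phi_2^\pm]=(\phi^\pm_{ij})$, with columns extended analytically as usual ($\phi_1^-,\phi_2^+$ to $\mathbb{D}_+$, $\phi_1^+,\phi_2^-$ to $\mathbb{D}_-$). Define the squared eigenfunctions $$\Omega_{+,1}=\begin{pmatrix}(\phi^-_{11})^2\\(\phi^-_{21})^2\end{pmatrix},\ \Omega_{-,2}=\begin{pmatrix}(\phi^-_{12})^2\\(\phi^-_{22})^2\end{pmatrix},\ \Omega_{-,1}=\begin{pmatrix}(\phi^+_{21})^2\\-(\phi^+_{11})^2\end{pmatrix},\ \Omega_{+,2}=\begin{pmatrix}(\phi^+_{22})^2\\-(\phi^+_{12})^2\end{pmatrix}.$$ Then, with $\hat q=q_x$, $\hat r=q_x^*$, $$\mathcal{L}(\sigma_3\partial_x\Omega_{+,1})=-\lambda^2\sigma_3\partial_x\Omega_{+,1},\quad \mathcal{L}(\sigma_3\partial_x\Omega_{-,2})=-\lambda^2\sigma_3\partial_x\Omega_{-,2},$$ $$\widetilde{\mathcal{L}}(\sigma_3\partial_x\Omega_{-,1})=-\lambda^2\sigma_3\partial_x\Omega_{-,1},\quad \widetilde{\mathcal{L}}(\sigma_3\partial_x\Omega_{+,2})=-\lambda^2\sigma_3\partial_x\Omega_{+,2},$$ for $\lambda$ in the respective domains of analyticity (or on $\Sigma$).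
   Context: $\sigma_3=\mathrm{diag}(1,-1)$. $q(x,t)$ complex-valued, rapidly decaying with its derivatives as $|x|\to\infty$; $Q=\begin{pmatrix}0&q\\ q^*&0\end{pmatrix}$. $\Phi^\pm(\lambda;x,t)$ are the solutions of $\Phi_x=(-\mathrm{i}\lambda^2\sigma_3+\lambda Q_x)\Phi$ with $\Phi^\pm e^{\mathrm{i}\lambda^2x\sigma_3}\to\mathbb{I}$ as $x\to\pm\infty$. $\Sigma=\mathbb{R}\cup\mathrm{i}\mathbb{R}$, $\mathbb{D}_+=\{\arg\lambda\in(0,\pi/2)\cup(\pi,3\pi/2)\}$, $\mathbb{D}_-=\{\arg\lambda\in(\pi/2,\pi)\cup(3\pi/2,2\pi)\}$. With $\partial=\partial_x$, $\partial_-^{-1}f=\int_{-\infty}^xf(y)\mathrm{d}y$, $\partial_+^{-1}f=\int_x^{+\infty}f(y)\mathrm{d}y$, the recursion operator and its adjoint act on vectors $(w_1,w_2)^\top$ by $$\mathcal{L}=-\frac12\begin{pmatrix}\mathrm{i}\partial+\hat q_x\partial_-^{-1}\hat r+\hat q\hat r&\hat q_x\partial_-^{-1}\hat q+\hat q^2\\ \hat r_x\partial_-^{-1}\hat r+\hat r^2&-\mathrm{i}\partial+\hat r_x\partial_-^{-1}\hat q+\hat q\hat r\end{pmatrix},\quad \widetilde{\mathcal{L}}=-\frac12\begin{pmatrix}-\mathrm{i}\partial-\hat r_x\partial_+^{-1}\hat q+\hat q\hat r&\hat r_x\partial_+^{-1}\hat r-\hat r^2\\ \hat q_x\partial_+^{-1}\hat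 q-\hat q^2&\mathrm{i}\partial-\hat q_x\partial_+^{-1}\hat r+\hat q\hat r\end{pmatrix},$$ where e.g. $\hat q_x\partial_-^{-1}\hat r$ means $w\mapsto \hat q_x\int_{-\infty}^x\hat r(y)w(y)\mathrm{d}y$ and $\hat q\hat r$ is multiplication. *)

(* Defs.v *)
From Stdlib Require Import Reals.
From Coquelicot Require Import Coquelicot.
Open Scope R_scope.

Definition cexp (z : C) : C :=
  (exp (Re z) * cos (Im z), exp (Re z) * sin (Im z)).

(* Derivative of a complex-valued function of a real variable
   (componentwise; it is the true derivative whenever f is differentiable). *)
Definition Cderiv (f : R -> C) (x : R) : C :=
  (Derive (fun y => Re (f y)) x, Derive (fun y => Im (f y)) x).

Definition rapidly_decaying (q : R -> C) : Prop :=
  (forall n x, ex_derive_n (fun y => Re (q y)) n x /\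
               ex_derive_n (fun y => Im (q y)) n x) /\
  (forall n k : nat, exists M : R, forall x,
      Rabs (x ^ k * Derive_n (fun y => Re (q y)) n x) <= M /\
      Rabs (x ^ k * Derive_n (fun y => Im (q y)) n x) <= M).

Definition Sigma (lam : C) : Prop := Im lam = 0 \/ Re lam = 0.
(* arg lam in (0, pi/2) \/ (pi, 3pi/2) *)
Definition D_plus (lam : C) : Prop :=
  (0 < Re lam /\ 0 < Im lam) \/ (Re lam < 0 /\ Im lam < 0).
(* arg lam in (pi/2, pi) \/ (3pi/2, 2pi) *)
Definition D_minus (lam : C) : Prop :=
  (Re lam < 0 /\ 0 < Im lam) \/ (0 < Re lam /\ Im lam < 0).

(* A column (a, b) solves  Phi_x = (-i lam^2 sigma3 + lam Q_x) Phi,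
   Q_x = [[0, q_x], [q_x^*, 0]]. *)
Definition lax_ode (qx : R -> C) (lam : C) (a b : R -> C) : Prop :=
  forall x,
    is_derive a x (- (Ci * lam * lam) * a x + lam * qx x * b x)%C /\
    is_derive b x (Ci * lam * lam * b x + lam * Cconj (qx x) * a x)%C.

Definition Clim (f : R -> C) (F : (R -> Prop) -> Prop) (l : C) : Prop :=
  filterlim (fun x => Re (f x)) F (locally (Re l)) /\
  filterlim (fun x => Im (f x)) F (locally (Im l)).

Definition minf : (R -> Prop) -> Prop := Rbar_locally m_infty.
Definition pinf : (R -> Prop) -> Prop := Rbar_locally p_infty.

(* Jost-solution columns, characterised by the ODE and the asymptotics
   Phi^{+-} e^{i lam^2 x sigma3} -> I as x -> +-oo. *)
Definition jost_col1 (qx : R -> C) (lam : C) (F : (R -> Prop) -> Prop)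
    (a b : R -> C) : Prop :=
  lax_ode qx lam a b /\
  Clim (fun x => a x * cexp (Ci * lam * lam * RtoC x))%C F (RtoC 1) /\
  Clim (fun x => b x * cexp (Ci * lam * lam * RtoC x))%C F (RtoC 0).

Definition jost_col2 (qx : R -> C) (lam : C) (F : (R -> Prop) -> Prop)
    (a b : R -> C) : Prop :=
  lax_ode qx lam a b /\
  Clim (fun x => a x * cexp (- (Ci * lam * lam * RtoC x)))%C F (RtoC 0) /\
  Clim (fun x => b x * cexp (- (Ci * lam * lam * RtoC x)))%C F (RtoC 1).

(* partial_-^{-1} f (x) = int_{-oo}^x f,  partial_+^{-1} f (x) = int_x^{+oo} f *)
Definition int_minus (f : R -> C) (x : R) : C :=
  @RInt_gen C_R_CompleteNormedModule f minf (at_point x).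
Definition int_plus (f : R -> C) (x : R) : C :=
  @RInt_gen C_R_CompleteNormedModule f (at_point x) pinf.
Definition conv_minus (f : R -> C) : Prop :=
  forall x, @ex_RInt_gen C_R_NormedModule f minf (at_point x).
Definition conv_plus (f : R -> C) : Prop :=
  forall x, @ex_RInt_gen C_R_NormedModule f (at_point x) pinf.

Definition L_op1 (qh rh w1 w2 : R -> C) (x : R) : C :=
  (- / 2 * ( Ci * Cderiv w1 x
             + Cderiv qh x * int_minus (fun y => rh y * w1 y) x
             + qh x * rh x * w1 x
             + Cderiv qh x * int_minus (fun y => qh y * w2 y) x
             + qh x * qh x * w2 x))%C.
Definition L_op2 (qh rh w1 w2 : R -> C) (x : R) : C :=
  (- / 2 * ( Cderiv rh x * int_minus (fun y => rh y * w1 y) x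
             + rh x * rh x * w1 x
             - Ci * Cderiv w2 x
             + Cderiv rh x * int_minus (fun y => qh y * w2 y) x
             + qh x * rh x * w2 x))%C.

Definition Lt_op1 (qh rh w1 w2 : R -> C) (x : R) : C :=
  (- / 2 * ( - (Ci * Cderiv w1 x)
             - Cderiv rh x * int_plus (fun y => qh y * w1 y) x
             + qh x * rh x * w1 x
             + Cderiv rh x * int_plus (fun y => rh y * w2 y) x
             - rh x * rh x * w2 x))%C.
Definition Lt_op2 (qh rh w1 w2 : R -> C) (x : R) : C :=
  (- / 2 * ( Cderiv qh x * int_plus (fun y => qh y * w1 y) x
             - qh x * qh x * w1 x
             + Ci * Cderiv w2 x
             - Cderiv qh x * int_plus (fun y => rh y * w2 y) x
             + qh x * rh x * w2 x))%C.

Definition L_eigen (qh rh : R -> C) (lam : C) (w1 w2 : R -> C) : Prop :=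
  conv_minus (fun y => rh y * w1 y)%C /\ conv_minus (fun y => qh y * w2 y)%C /\
  (forall x, ex_derive w1 x /\ ex_derive w2 x) /\
  forall x, L_op1 qh rh w1 w2 x = (- (lam * lam) * w1 x)%C /\
            L_op2 qh rh w1 w2 x = (- (lam * lam) * w2 x)%C.

Definition Lt_eigen (qh rh : R -> C) (lam : C) (w1 w2 : R -> C) : Prop :=
  conv_plus (fun y => qh y * w1 y)%C /\ conv_plus (fun y => rh y * w2 y)%C /\
  (forall x, ex_derive w1 x /\ ex_derive w2 x) /\
  forall x, Lt_op1 qh rh w1 w2 x = (- (lam * lam) * w1 x)%C /\
            Lt_op2 qh rh w1 w2 x = (- (lam * lam) * w2 x)%C.

(* sigma3 d/dx of a vector (O1, O2): (O1', -O2'). *)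
Definition s3dx1 (O1 : R -> C) : R -> C := fun x => Cderiv O1 x.
Definition s3dx2 (O2 : R -> C) : R -> C := fun x => (- Cderiv O2 x)%C.

(* Main.v *)
Require Import Defs.
From Stdlib Require Import Reals Lra.
From Coquelicot Require Import Coquelicot.
Open Scope R_scope.


Lemma isdC_fst (f : R -> C) x (l : C) :
  @is_derive R_AbsRing C_R_NormedModule f x l ->
  is_derive (fun y => fst (f y)) x (fst l).
Proof.
  intros H.
  unfold is_derive in *.
  pose proof (filterdiff_comp' f (fun t : prod_NormedModule R_AbsRing R_NormedModule R_NormedModule => fst t) x _ (fun t : prod_NormedModule R_AbsRing R_NormedModule R_NormedModule => fst t) H (filterdiff_linear _ (is_linear_fst))) as H'.
  exact H'.
Qed.

Lemma isdC_snd (f : R -> C) x (l : C) :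
  @is_derive R_AbsRing C_R_NormedModule f x l ->
  is_derive (fun y => snd (f y)) x (snd l).
Proof.
  intros H.
  unfold is_derive in *.
  pose proof (filterdiff_comp' f (fun t : prod_NormedModule R_AbsRing R_NormedModule R_NormedModule => snd t) x _ (fun t : prod_NormedModule R_AbsRing R_NormedModule R_NormedModule => snd t) H (filterdiff_linear _ (is_linear_snd))) as H'.
  exact H'.
Qed.

Lemma isdC_pair (f : R -> C) x (l : C) :
  is_derive (fun y => fst (f y)) x (fst l) ->
  is_derive (fun y => snd (f y)) x (snd l) ->
  @is_derive R_AbsRing C_R_NormedModule f x l.
Proof.
  intros H1 H2. unfold is_derive in *.
  pose proof (filterdiff_comp'_2 (K:=R_AbsRing) (U:=R_NormedModule) (V:=R_NormedModule)
     (W := prod_NormedModule R_AbsRing R_NormedModule R_NormedModule)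
     (fun y => fst (f y)) (fun y => snd (f y)) (fun u v => (u,v)) x _ _ (fun u v => (u,v)) H1 H2) as H.
  assert (HH : filterdiff (fun y => (fst (f y), snd (f y))) (locally x)
     (fun y : R_NormedModule => (scal y (fst l), scal y (snd l)))).
  { apply H. eapply filterdiff_ext_lin. eapply filterdiff_ext.
    2: apply (filterdiff_linear _ is_linear_id).
    intros [u v]; reflexivity. intros [u v]; reflexivity. }
  eapply filterdiff_ext_lin.
  - eapply filterdiff_ext. 2: exact HH. intros y. simpl. destruct (f y); reflexivity.
  - intros y. simpl. destruct l. reflexivity.
Qed.

Notation isdC := (@is_derive R_AbsRing C_R_NormedModule).

Lemma isdC_ext (f g : R -> C) x l : (forall y, f y = g y) -> isdC f x l -> isdC g x l.
Proof. intros H D. eapply is_derive_ext. exact H. exact D. Qed.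

Lemma isdC_const (c : C) x : isdC (fun _ => c) x (RtoC 0).
Proof. apply isdC_pair; simpl; apply (is_derive_const (K:=R_AbsRing) (V:=R_NormedModule)). Qed.

Lemma isR_eq (f : R -> R) x l l' : is_derive f x l -> l = l' -> is_derive f x l'.
Proof. intros H <-; exact H. Qed.
Lemma isdC_eq (f : R -> C) x (l l' : C) : isdC f x l -> l = l' -> isdC f x l'.
Proof. intros H <-; exact H. Qed.

Lemma isdC_plus (f g : R -> C) x df dg : isdC f x df -> isdC g x dg ->
  isdC (fun y => f y + g y)%C x (df + dg)%C.
Proof.
  intros F G.
  pose proof (isdC_fst _ _ _ F) as F1. pose proof (isdC_snd _ _ _ F) as F2.
  pose proof (isdC_fst _ _ _ G) as G1. pose proof (isdC_snd _ _ _ G) as G2.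
  apply isdC_pair; simpl.
  - exact (is_derive_plus _ _ x _ _ F1 G1).
  - exact (is_derive_plus _ _ x _ _ F2 G2).
Qed.

Lemma Rcomm : forall n m : R_AbsRing, mult n m = mult m n.
Proof. intros; apply Rmult_comm. Qed.

Lemma isdC_mult (f g : R -> C) x df dg : isdC f x df -> isdC g x dg ->
  isdC (fun y => f y * g y)%C x (df * g x + f x * dg)%C.
Proof.
  intros F G.
  pose proof (isdC_fst _ _ _ F) as F1. pose proof (isdC_snd _ _ _ F) as F2.
  pose proof (isdC_fst _ _ _ G) as G1. pose proof (isdC_snd _ _ _ G) as G2.
  apply isdC_pair; simpl.
  - eapply isR_eq.
    exact (is_derive_minus _ _ x _ _ (is_derive_mult _ _ x _ _ F1 G1 Rcomm) (is_derive_mult _ _ x _ _ F2 G2 Rcomm)).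
    unfold minus, plus, opp, mult; simpl. ring.
  - eapply isR_eq.
    exact (is_derive_plus _ _ x _ _ (is_derive_mult _ _ x _ _ F1 G2 Rcomm) (is_derive_mult _ _ x _ _ F2 G1 Rcomm)).
    unfold minus, plus, opp, mult; simpl. ring.
Qed.

Lemma isdC_opp (f : R -> C) x df : isdC f x df -> isdC (fun y => - f y)%C x (- df)%C.
Proof.
  intros F.
  pose proof (isdC_fst _ _ _ F) as F1. pose proof (isdC_snd _ _ _ F) as F2.
  apply isdC_pair; simpl.
  - exact (is_derive_opp _ x _ F1).
  - exact (is_derive_opp _ x _ F2).
Qed.

Lemma isdC_minus (f g : R -> C) x df dg : isdC f x df -> isdC g x dg ->
  isdC (fun y => f y - g y)%C x (df - dg)%C.
Proof. intros F G. apply isdC_plus; auto. apply isdC_opp; auto. Qed.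

Ltac Cring := first [ring | (apply injective_projections; simpl; ring)].

Lemma isdC_cmul (c : C) (f : R -> C) x df : isdC f x df ->
  isdC (fun y => c * f y)%C x (c * df)%C.
Proof. intros F. eapply isdC_eq. apply isdC_mult. apply isdC_const. exact F.
  Cring. Qed.

Lemma Cderiv_isd (f : R -> C) x (l : C) : isdC f x l -> Cderiv f x = l.
Proof.
  intros H. unfold Cderiv, Re, Im.
  apply injective_projections; simpl.
  - exact (is_derive_unique _ _ _ (isdC_fst _ _ _ H)).
  - exact (is_derive_unique _ _ _ (isdC_snd _ _ _ H)).
Qed.

Lemma Cderiv_isd' (f : R -> C) x : ex_derive (fun y => Re (f y)) x -> ex_derive (fun y => Im (f y)) x ->
  isdC f x (Cderiv f x).
Proof.
  intros H1 H2. apply isdC_pair; simpl; apply Derive_correct; assumption.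
Qed.


Lemma RIntgen_of_lim_m (f : R -> C) x (G : R -> C) (l : C) :
  (forall u, @is_RInt C_R_NormedModule f u x (G u)) ->
  @filterlim R C_R_NormedModule G minf (locally l) ->
  @is_RInt_gen C_R_NormedModule f minf (at_point x) l.
Proof.
  intros HI HL P HP.
  unfold filtermapi.
  specialize (HL P HP).
  apply (Filter_prod _ _ _ (fun u => P (G u)) (fun v => v = x)); [exact HL|reflexivity|].
  intros u v Hu Hv. subst v. exists (G u). split; auto.
Qed.

Lemma RIntgen_of_lim_p (f : R -> C) x (G : R -> C) (l : C) :
  (forall u, @is_RInt C_R_NormedModule f x u (G u)) ->
  @filterlim R C_R_NormedModule G pinf (locally l) ->
  @is_RInt_gen C_R_NormedModule f (at_point x) pinf l.
Proof.
  intros HI HL P HP.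
  unfold filtermapi.
  specialize (HL P HP).
  apply (Filter_prod _ _ _ (fun v => v = x) (fun u => P (G u))); [reflexivity|exact HL|].
  intros v u Hv Hu. subst v. exists (G u). split; auto.
Qed.

Lemma Clim_loc (f : R -> C) F (FF : Filter F) (l : C) :
  Clim f F l -> @filterlim R C_R_NormedModule f F (locally l).
Proof.
  intros [H1 H2].
  apply filterlim_locally. intros eps.
  pose proof (proj1 (filterlim_locally _ _) H1 eps) as A1.
  pose proof (proj1 (filterlim_locally _ _) H2 eps) as A2.
  eapply filter_imp. 2: exact (filter_and _ _ A1 A2).
  intros y [B1 B2]. split; assumption.
Qed.

Lemma normC (z : C) : @norm R_AbsRing C_R_NormedModule z = Cmod z.
Proof.
  destruct z as [a b]. unfold norm. simpl. unfold prod_norm. simpl. unfold Cmod. simpl.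
  unfold norm; simpl. unfold abs; simpl.
  rewrite !Rmult_1_r, <- !Rabs_mult, !(Rabs_pos_eq (_ * _)) by nra. reflexivity.
Qed.

Lemma int_invsq (K u v : R) : v <= u -> u < 0 ->
  is_RInt (fun y => K / (y * y)) v u (K / v - K / u).
Proof.
  intros Hvu Hu.
  assert (E : K / v - K / u = minus ((fun y => - K / y) u) ((fun y => - K / y) v)).
  { unfold minus, plus, opp; simpl. field. split; lra. }
  rewrite E.
  apply (is_RInt_derive (V:=R_CompleteNormedModule) (fun y => - K / y) (fun y => K / (y*y))).
  - intros y Hy. rewrite Rmin_left in Hy by lra. rewrite Rmax_right in Hy by lra.
    auto_derive. lra. field. lra.
  - intros y Hy. rewrite Rmin_left in Hy by lra. rewrite Rmax_right in Hy by lra.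
    apply (ex_derive_continuous (K:=R_AbsRing) (V:=R_NormedModule)). auto_derive. nra.
Qed.

Lemma exgen_m (f : R -> C) x :
  (forall y, @ex_derive R_AbsRing C_R_NormedModule f y) ->
  (exists N K, N < 0 /\ forall y, y <= N -> Cmod (f y) <= K / (y * y)) ->
  @ex_RInt_gen C_R_NormedModule f minf (at_point x).
Proof.
  intros Hd [N [K [HN HB]]].
  assert (Hc : forall y, @continuous R_UniformSpace C_R_NormedModule f y).
  { intros y. apply ex_derive_continuous. apply Hd. }
  assert (Hex : forall a b, @ex_RInt C_R_CompleteNormedModule f a b).
  { intros a b. apply ex_RInt_continuous. intros z _. apply Hc. }
  set (I := fun u => @RInt C_R_CompleteNormedModule f u x).
  assert (HI : forall u, @is_RInt C_R_NormedModule f u x (I u)).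
  { intros u. apply (RInt_correct (V:=C_R_CompleteNormedModule)). apply Hex. }
  assert (HK : 0 <= K).
  { specialize (HB N (Rle_refl N)). pose proof (Cmod_ge_0 (f N)).
    assert (0 <= K / (N * N)) by lra.
    destruct (Rle_or_lt 0 K); auto.
    assert (K / (N*N) < 0). { apply Rdiv_neg_pos. lra. nra. } lra. }
  assert (Hlim : exists l : C_R_CompleteNormedModule, filterlim I minf (locally l)).
  { apply (filterlim_locally_cauchy (F := minf) I). intros eps.
    set (M := Rmin N (- (K + 1) / eps)).
    assert (HM : M < 0). { unfold M. apply Rle_lt_trans with N; auto. apply Rmin_l. }
    exists (fun u => u < M). split.
    - exists M. auto.
    - assert (key : forall u v, u < M -> v < M -> v <= u ->
                 @norm R_AbsRing C_R_NormedModule (minus (I u) (I v)) < eps).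
      { intros u v Hu Hv Hvu.
        destruct (Hex v u) as [J HJ].
        pose proof (is_RInt_Chasles _ _ _ _ _ _ HJ (HI u)) as HC.
        assert (E : I v = plus J (I u)).
        { apply (is_RInt_unique (V:=C_R_CompleteNormedModule) f v x). exact HC. }
        assert (E2 : minus (I u) (I v) = opp J).
        { rewrite E. unfold minus, plus, opp; simpl. apply injective_projections; simpl; unfold plus, opp; simpl; ring. }
        rewrite E2, norm_opp.
        assert (Hle : norm J <= K / v - K / u).
        { apply (norm_RInt_le f (fun y => K / (y * y)) v u J); auto.
          - intros y Hy. rewrite normC. apply HB.
            assert (M <= N) by apply Rmin_l. lra.
          - apply int_invsq; lra. }
        assert (M <= - (K + 1) / eps) by apply Rmin_r.
        assert (Heps : 0 < eps) by apply cond_pos.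
        assert (Hu' : u * eps < - (K + 1)).
        { assert (u < - (K + 1) / eps) by lra.
          apply (Rmult_lt_compat_r eps) in H0; auto.
          unfold Rdiv in H0. rewrite Rmult_assoc, Rinv_l in H0 by lra. lra. }
        assert (Kv : K / v <= 0).
        { unfold Rdiv. assert (/ v < 0) by (apply Rinv_lt_0_compat; lra). nra. }
        assert (Ku : - (K / u) < eps).
        { assert (Hw : u * / u = 1) by (field; lra).
          assert (/ u < 0) by (apply Rinv_lt_0_compat; lra).
          unfold Rdiv. set (w := / u) in *.
          assert (- K * w * (- u) = K) by (transitivity (K * (u * w)); [ring | rewrite Hw; ring]).
          assert (eps * (- u) > K + 1) by lra.
          assert ((eps - - K * w) * (- u) > 0) by nra.
          nra. }
        eapply Rle_lt_trans; [exact Hle | lra]. }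
      intros u v Hu Hv. apply (@norm_compat1 R_AbsRing C_R_CompleteNormedModule).
      destruct (Rle_or_lt u v) as [Hvu|Huv].
      + apply key; auto.
      + rewrite <- norm_opp. 
        assert (Eo : opp (minus (I v) (I u)) = minus (I u) (I v)).
        { unfold minus, plus, opp; simpl. apply injective_projections; simpl; unfold plus, opp; simpl; ring. }
        eapply Rle_lt_trans. 2: apply (key u v); auto; lra.
        rewrite <- Eo. apply Req_le. reflexivity. }
  destruct Hlim as [l Hl].
  exists l. apply (RIntgen_of_lim_m f x I l HI). exact Hl.
Qed.

Lemma int_invsq_p (K u v : R) : u <= v -> 0 < u ->
  is_RInt (fun y => K / (y * y)) u v (K / u - K / v).
Proof.
  intros Hvu Hu.
  assert (E : K / u - K / v = minus ((fun y => - K / y) v) ((fun y => - K / y) u)).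
  { unfold minus, plus, opp; simpl. field. split; lra. }
  rewrite E.
  apply (is_RInt_derive (V:=R_CompleteNormedModule) (fun y => - K / y) (fun y => K / (y*y))).
  - intros y Hy. rewrite Rmin_left in Hy by lra. rewrite Rmax_right in Hy by lra.
    auto_derive. lra. field. lra.
  - intros y Hy. rewrite Rmin_left in Hy by lra. rewrite Rmax_right in Hy by lra.
    apply (ex_derive_continuous (K:=R_AbsRing) (V:=R_NormedModule)). auto_derive. nra.
Qed.

Lemma exgen_p (f : R -> C) x :
  (forall y, @ex_derive R_AbsRing C_R_NormedModule f y) ->
  (exists N K, 0 < N /\ forall y, N <= y -> Cmod (f y) <= K / (y * y)) ->
  @ex_RInt_gen C_R_NormedModule f (at_point x) pinf.
Proof.
  intros Hd [N [K [HN HB]]].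
  assert (Hc : forall y, @continuous R_UniformSpace C_R_NormedModule f y).
  { intros y. apply ex_derive_continuous. apply Hd. }
  assert (Hex : forall a b, @ex_RInt C_R_CompleteNormedModule f a b).
  { intros a b. apply ex_RInt_continuous. intros z _. apply Hc. }
  set (I := fun u => @RInt C_R_CompleteNormedModule f x u).
  assert (HI : forall u, @is_RInt C_R_NormedModule f x u (I u)).
  { intros u. apply (RInt_correct (V:=C_R_CompleteNormedModule)). apply Hex. }
  assert (HK : 0 <= K).
  { specialize (HB N (Rle_refl N)). pose proof (Cmod_ge_0 (f N)).
    assert (0 <= K / (N * N)) by lra.
    destruct (Rle_or_lt 0 K); auto.
    assert (K / (N*N) < 0). { apply Rdiv_neg_pos. lra. nra. } lra. }
  assert (Hlim : exists l : C_R_CompleteNormedModule, filterlim I pinf (locally l)).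
  { apply (filterlim_locally_cauchy (F := pinf) I). intros eps.
    set (M := Rmax N ((K + 1) / eps)).
    assert (HM : 0 < M). { unfold M. apply Rlt_le_trans with N; auto. apply Rmax_l. }
    exists (fun u => M < u). split.
    - exists M. auto.
    - assert (key : forall u v, M < u -> M < v -> u <= v ->
                 @norm R_AbsRing C_R_NormedModule (minus (I v) (I u)) < eps).
      { intros u v Hu Hv Hvu.
        destruct (Hex u v) as [J HJ].
        pose proof (is_RInt_Chasles _ _ _ _ _ _ (HI u) HJ) as HC.
        assert (E : I v = plus (I u) J).
        { apply (is_RInt_unique (V:=C_R_CompleteNormedModule) f x v). exact HC. }
        assert (E2 : minus (I v) (I u) = J).
        { rewrite E. unfold minus, plus, opp; simpl. apply injective_projections; simpl; unfold plus, opp; simpl; ring. }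
        rewrite E2.
        assert (Hle : norm J <= K / u - K / v).
        { apply (norm_RInt_le f (fun y => K / (y * y)) u v J); auto.
          - intros y Hy. rewrite normC. apply HB.
            assert (N <= M) by apply Rmax_l. lra.
          - apply int_invsq_p; lra. }
        assert ((K + 1) / eps <= M) by apply Rmax_r.
        assert (Heps : 0 < eps) by apply cond_pos.
        assert (Hu' : u * eps > (K + 1)).
        { assert (u > (K + 1) / eps) by lra.
          apply (Rmult_lt_compat_r eps) in H0; auto.
          unfold Rdiv in H0. rewrite Rmult_assoc, Rinv_l in H0 by lra. lra. }
        assert (Kv : 0 <= K / v).
        { unfold Rdiv. assert (0 < / v) by (apply Rinv_0_lt_compat; lra). nra. }
        assert (Ku : K / u < eps).
        { assert (Hw : u * / u = 1) by (field; lra).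
          assert (0 < / u) by (apply Rinv_0_lt_compat; lra).
          unfold Rdiv. set (w := / u) in *.
          assert (K * w * u = K) by (transitivity (K * (u * w)); [ring | rewrite Hw; ring]).
          assert ((eps - K * w) * u > 0) by nra.
          nra. }
        eapply Rle_lt_trans; [exact Hle | lra]. }
      intros u v Hu Hv. apply (@norm_compat1 R_AbsRing C_R_CompleteNormedModule).
      destruct (Rle_or_lt u v) as [Hvu|Huv].
      + apply key; auto.
      + rewrite <- norm_opp. 
        assert (Eo : opp (minus (I v) (I u)) = minus (I u) (I v)).
        { unfold minus, plus, opp; simpl. apply injective_projections; simpl; unfold plus, opp; simpl; ring. }
        eapply Rle_lt_trans. 2: apply (key v u); auto; lra.
        rewrite <- Eo. apply Req_le. reflexivity. }
  destruct Hlim as [l Hl].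
  exists l. apply (RIntgen_of_lim_p f x I l HI). exact Hl.
Qed.


Lemma Cmod_le_sum (z : C) : Cmod z <= Rabs (fst z) + Rabs (snd z).
Proof.
  destruct z as [a b]. simpl.
  replace (a, b) with ((RtoC a) + (0, b))%C.
  2:{ unfold RtoC. apply injective_projections; simpl; ring. }
  eapply Rle_trans. apply Cmod_triangle. rewrite Cmod_R.
  apply Rplus_le_compat_l. unfold Cmod. simpl.
  replace (0 * (0 * 1) + b * (b * 1)) with (Rabs b * Rabs b).
  rewrite sqrt_square. lra. apply Rabs_pos.
  rewrite <- Rabs_mult. rewrite Rabs_right by nra. ring.
Qed.

Definition Cto0 (g : R -> C) (F : (R -> Prop) -> Prop) :=
  forall eps, 0 < eps -> F (fun y => Cmod (g y) < eps).

Lemma Clim_Cto0 (g : R -> C) F (FF : Filter F) l :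
  Clim g F l -> Cto0 (fun y => g y - l)%C F.
Proof.
  intros [H1 H2] eps He.
  assert (He2 : 0 < eps / 2) by lra.
  pose proof (proj1 (filterlim_locally _ _) H1 (mkposreal _ He2)) as A1.
  pose proof (proj1 (filterlim_locally _ _) H2 (mkposreal _ He2)) as A2.
  eapply filter_imp. 2: exact (filter_and _ _ A1 A2).
  intros y [B1 B2]. simpl in B1, B2.
  unfold ball in B1, B2; simpl in B1, B2. unfold AbsRing_ball, abs, minus, plus, opp in B1, B2; simpl in B1, B2.
  eapply Rle_lt_trans. apply Cmod_le_sum. simpl.
  unfold Re, Im in *. lra.
Qed.

Lemma Clim_bounded (g : R -> C) F (FF : Filter F) l :
  Clim g F l -> F (fun y => Cmod (g y) <= Cmod l + 1).
Proof.
  intros H. pose proof (Clim_Cto0 g F FF l H 1 Rlt_0_1) as A.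
  eapply filter_imp. 2: exact A. intros y Hy. simpl in Hy.
  replace (g y) with ((g y - l) + l)%C by ring.
  eapply Rle_trans. apply Cmod_triangle. lra.
Qed.

Lemma Cto0_mult_bd (g h : R -> C) F (FF : Filter F) B :
  Cto0 g F -> F (fun y => Cmod (h y) <= B) -> Cto0 (fun y => g y * h y)%C F.
Proof.
  intros Hg Hh eps He.
  set (B' := Rabs B + 1).
  assert (HB' : 0 < B') by (unfold B'; pose proof (Rabs_pos B); lra).
  assert (He' : 0 < eps / B') by (apply Rdiv_lt_0_compat; lra).
  eapply filter_imp. 2: exact (filter_and _ _ (Hg _ He') Hh).
  intros y [A1 A2]. rewrite Cmod_mult.
  assert (Cmod (h y) <= B') by (unfold B'; pose proof (Rle_abs B); lra).
  pose proof (Cmod_ge_0 (g y)). pose proof (Cmod_ge_0 (h y)).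
  apply Rle_lt_trans with (Cmod (g y) * B'). apply Rmult_le_compat_l; lra.
  replace eps with ((eps / B') * B') by (field; lra).
  apply Rmult_lt_compat_r; lra.
Qed.

Lemma Cto0_loc (g : R -> C) F (FF : Filter F) :
  Cto0 g F -> @filterlim R C_R_NormedModule g F (locally (RtoC 0)).
Proof.
  intros H. apply filterlim_locally. intros eps.
  eapply filter_imp. 2: exact (H eps (cond_pos eps)).
  intros y Hy. split; unfold ball; simpl; unfold AbsRing_ball, abs, minus, plus, opp; simpl.
  - pose proof (re_le_Cmod (g y)). unfold Re in *. rewrite Ropp_0, Rplus_0_r. lra.
  - assert (Rabs (Im (g y)) <= Cmod (g y)).
    { pose proof (Rmax_Cmod (g y)). eapply Rle_trans. 2: exact H0. apply Rmax_r. }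
    unfold Im in *. rewrite Ropp_0, Rplus_0_r. lra.
Qed.

Lemma cexp_inv (z : C) : (cexp z * cexp (- z))%C = RtoC 1.
Proof.
  destruct z as [u v]. unfold cexp, Re, Im. simpl.
  rewrite cos_neg, sin_neg.
  assert (E : exp u * exp (- u) = 1).
  { rewrite <- exp_plus. replace (u + - u) with 0 by ring. apply exp_0. }
  pose proof (sin2_cos2 v). unfold Rsqr in H.
  apply injective_projections; simpl.
  - transitivity ((exp u * exp (-u)) * (cos v * cos v + sin v * sin v)). ring.
    rewrite E. lra.
  - transitivity ((exp u * exp (-u)) * (cos v * (- sin v) + sin v * cos v)). ring.
    rewrite E. ring.
Qed.

Lemma cexp_inv' (z : C) : (cexp (- z) * cexp z)%C = RtoC 1.
Proof. rewrite Cmult_comm. apply cexp_inv. Qed.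

Lemma Cmod_cexp (z : C) : Cmod (cexp z) = exp (Re z).
Proof.
  destruct z as [u v]. unfold cexp, Cmod, Re, Im. simpl.
  replace (exp u * cos v * (exp u * cos v * 1) + exp u * sin v * (exp u * sin v * 1))
    with (exp u * exp u * (cos v * cos v + sin v * sin v)) by ring.
  pose proof (sin2_cos2 v). unfold Rsqr in H. rewrite Rplus_comm in H. rewrite H, Rmult_1_r.
  apply sqrt_square. pose proof (exp_pos u); lra.
Qed.

Lemma jost_cons (a b E E' : R -> C) F (FF : Filter F) (la : C) :
  Clim (fun x => a x * E x)%C F la -> Clim (fun x => b x * E x)%C F (RtoC 0) ->
  (forall y, E y * E' y = RtoC 1)%C ->
  F (fun y => Cmod (E' y) <= 1) ->
  (exists B, F (fun y => Cmod (a y) <= B /\ Cmod (b y) <= B)) /\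
  Cto0 (fun y => a y * b y)%C F.
Proof.
  intros Ha Hb HE HE'.
  assert (Ea : forall y, a y = ((a y * E y) * E' y)%C).
  { intros y. rewrite <- Cmult_assoc, HE. unfold RtoC. apply injective_projections; simpl; ring. }
  assert (Eb : forall y, b y = ((b y * E y) * E' y)%C).
  { intros y. rewrite <- Cmult_assoc, HE. unfold RtoC. apply injective_projections; simpl; ring. }
  pose proof (Clim_bounded _ F FF la Ha) as Ba.
  pose proof (Clim_bounded _ F FF _ Hb) as Bb.
  split.
  - exists (Rmax (Cmod la + 1) (Cmod (RtoC 0) + 1)).
    eapply filter_imp. 2: exact (filter_and _ _ (filter_and _ _ Ba Bb) HE').
    intros y [[A1 A2] A3].
    pose proof (Cmod_ge_0 (E' y)). pose proof (Cmod_ge_0 (a y * E y)%C). pose proof (Cmod_ge_0 (b y * E y)%C).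
    split.
    + rewrite Ea, Cmod_mult. eapply Rle_trans. 2: apply Rmax_l.
      apply Rle_trans with (Cmod (a y * E y)%C * 1). apply Rmult_le_compat_l; lra. lra.
    + rewrite Eb, Cmod_mult. eapply Rle_trans. 2: apply Rmax_r.
      apply Rle_trans with (Cmod (b y * E y)%C * 1). apply Rmult_le_compat_l; lra. lra.
  - pose proof (Clim_Cto0 _ F FF _ Hb) as Cb.
    assert (Cb' : Cto0 (fun y => b y * E y)%C F).
    { intros eps He. eapply filter_imp. 2: exact (Cb eps He). intros y. simpl.
      replace (b y * E y - 0)%C with (b y * E y)%C. auto. unfold RtoC. apply injective_projections; simpl; ring. }
    pose proof (Cto0_mult_bd _ (fun y => (a y * E y) * E' y * E' y)%C F FF ((Cmod la + 1) * 1 * 1) Cb') as R.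
    assert (Hbd : F (fun y => Cmod ((a y * E y) * E' y * E' y)%C <= (Cmod la + 1) * 1 * 1)).
    { eapply filter_imp. 2: exact (filter_and _ _ Ba HE').
      intros y [A1 A3]. cbv beta in A1. rewrite Cmod_mult. rewrite Cmod_mult.
      pose proof (Cmod_ge_0 (E' y)). pose proof (Cmod_ge_0 (a y * E y)%C).
      apply Rmult_le_compat; try nra. }
    specialize (R Hbd).
    intros eps He. eapply filter_imp. 2: exact (R eps He). intros y Hy.
    replace (a y * b y)%C with (b y * E y * (a y * E y * E' y * E' y))%C. exact Hy.
    rewrite (Ea y) at 2. rewrite (Eb y) at 2. ring.
Qed.

Lemma Cto0_loc_l (g : R -> C) F (FF : Filter F) (l : C) :
  Cto0 (fun y => g y - l)%C F -> @filterlim R C_R_NormedModule g F (locally l).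
Proof.
  intros H. apply filterlim_locally. intros eps.
  eapply filter_imp. 2: exact (H eps (cond_pos eps)).
  intros y Hy. split; unfold ball; simpl; unfold AbsRing_ball, abs, minus, plus, opp; simpl.
  - pose proof (re_le_Cmod (g y - l)%C). unfold Re in *. simpl in H0. lra.
  - assert (Rabs (Im (g y - l)%C) <= Cmod (g y - l)%C).
    { pose proof (Rmax_Cmod (g y - l)%C). eapply Rle_trans. 2: exact H0. apply Rmax_r. }
    unfold Im in *. simpl in H0. lra.
Qed.

Lemma Cto0_cmul (g : R -> C) F (FF : Filter F) (c : C) :
  Cto0 g F -> Cto0 (fun y => c * g y)%C F.
Proof.
  intros H. pose proof (Cto0_mult_bd g (fun _ => c) F FF (Cmod c) H) as A.
  assert (B : F (fun _ => Cmod c <= Cmod c)) by (apply filter_forall; intros; lra).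
  specialize (A B). intros eps He. eapply filter_imp. 2: exact (A eps He).
  intros y. simpl. rewrite Cmult_comm. auto.
Qed.

Lemma bound_prod (r w : C) (K W y : R) : y * y > 0 ->
  Cmod r <= K / (y * y) -> Cmod w <= W -> Cmod (r * w)%C <= (K * W) / (y * y).
Proof.
  intros Hy H1 H2. rewrite Cmod_mult.
  pose proof (Cmod_ge_0 r). pose proof (Cmod_ge_0 w).
  replace (K * W / (y * y)) with (K / (y * y) * W) by (field; intro Hz; subst; lra).
  apply Rmult_le_compat; lra.
Qed.

Lemma bnd_w (c1 c2 Bq X Y : C) (B K : R) :
  Cmod X <= B -> Cmod Y <= B -> Cmod Bq <= K ->
  Cmod ((c1 * X + c2 * Bq * Y) * X + X * (c1 * X + c2 * Bq * Y))%C
    <= 2 * ((Cmod c1 * B + Cmod c2 * K * B) * B).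
Proof.
  intros HX HY HQ.
  pose proof (Cmod_ge_0 X). pose proof (Cmod_ge_0 Y). pose proof (Cmod_ge_0 Bq).
  pose proof (Cmod_ge_0 c1). pose proof (Cmod_ge_0 c2).
  assert (D : Cmod (c1 * X + c2 * Bq * Y)%C <= Cmod c1 * B + Cmod c2 * K * B).
  { eapply Rle_trans. apply Cmod_triangle. rewrite !Cmod_mult.
    apply Rplus_le_compat. apply Rmult_le_compat_l; lra.
    apply Rmult_le_compat; try nra. }
  pose proof (Cmod_ge_0 (c1 * X + c2 * Bq * Y)%C).
  eapply Rle_trans. apply Cmod_triangle. rewrite !Cmod_mult.
  assert (Cmod (c1 * X + c2 * Bq * Y)%C * Cmod X <= (Cmod c1 * B + Cmod c2 * K * B) * B)
    by (apply Rmult_le_compat; lra).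
  nra.
Qed.

Lemma exgen_m' (f : R -> C) x :
  (forall y, @ex_derive R_AbsRing C_R_NormedModule f y) ->
  (exists K, minf (fun y => Cmod (f y) <= K / (y * y))) ->
  @ex_RInt_gen C_R_NormedModule f minf (at_point x).
Proof.
  intros Hd [K [M HM]]. apply exgen_m; auto.
  exists (Rmin (M - 1) (-1)), K. split.
  - pose proof (Rmin_r (M - 1) (-1)). lra.
  - intros y Hy. apply HM. pose proof (Rmin_l (M - 1) (-1)). lra.
Qed.

Lemma exgen_p' (f : R -> C) x :
  (forall y, @ex_derive R_AbsRing C_R_NormedModule f y) ->
  (exists K, pinf (fun y => Cmod (f y) <= K / (y * y))) ->
  @ex_RInt_gen C_R_NormedModule f (at_point x) pinf.
Proof.
  intros Hd [K [M HM]]. apply exgen_p; auto.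
  exists (Rmax (M + 1) 1), K. split.
  - pose proof (Rmax_r (M + 1) 1). lra.
  - intros y Hy. apply HM. pose proof (Rmax_l (M + 1) 1). lra.
Qed.


Ltac Cring2 := apply injective_projections; unfold Ci; simpl; ring.

Ltac chain H :=
  repeat first [ apply isdC_plus | apply isdC_cmul | apply isdC_mult | apply isdC_opp | apply H ].

Lemma small_bd (z : C) (K y : R) : 1 < y * y -> Cmod z <= K / (y * y) -> Cmod z <= Rabs K.
Proof.
  intros Hy H. eapply Rle_trans. exact H.
  apply Rle_trans with (Rabs K / (y * y)).
  unfold Rdiv. apply Rmult_le_compat_r. left; apply Rinv_0_lt_compat; lra. apply Rle_abs.
  unfold Rdiv. pose proof (Rabs_pos K).
  assert (0 < / (y * y) < 1). { split. apply Rinv_0_lt_compat; lra. rewrite <- Rinv_1. apply Rinv_lt_contravar; lra. }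
  nra.
Qed.

Lemma minf_lt (c : R) : minf (fun y => y < c).
Proof. exists c. auto. Qed.

Lemma half_lem (X Y : C) : X = (- (RtoC 2) * Y)%C -> (- / 2 * X)%C = Y.
Proof. intros ->. field. Qed.

Lemma core_L (lam : C) (qh rh a b : R -> C) :
  (forall x, isdC qh x (Cderiv qh x)) ->
  (forall x, isdC rh x (Cderiv rh x)) ->
  (forall x, isdC a x (- (Ci * lam * lam) * a x + lam * qh x * b x)%C) ->
  (forall x, isdC b x (Ci * lam * lam * b x + lam * rh x * a x)%C) ->
  (exists K, minf (fun y => Cmod (qh y) <= K / (y * y) /\ Cmod (rh y) <= K / (y * y))) ->
  (exists B, minf (fun y => Cmod (a y) <= B /\ Cmod (b y) <= B)) ->
  Cto0 (fun y => a y * b y)%C minf ->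
  L_eigen qh rh lam (s3dx1 (fun x => a x * a x)%C) (s3dx2 (fun x => b x * b x)%C).
Proof.
  intros Hq Hr Ha Hb [K HK] [B HB] Hab.
  set (da := fun y => (- (Ci * lam * lam) * a y + lam * qh y * b y)%C).
  set (db := fun y => (Ci * lam * lam * b y + lam * rh y * a y)%C).
  set (w1 := s3dx1 (fun x => a x * a x)%C).
  set (w2 := s3dx2 (fun x => b x * b x)%C).
  assert (W1 : forall y, w1 y = (da y * a y + a y * da y)%C).
  { intros y. unfold w1, s3dx1. apply Cderiv_isd. apply isdC_mult; apply Ha. }
  assert (W2 : forall y, w2 y = (- (db y * b y + b y * db y))%C).
  { intros y. unfold w2, s3dx2. f_equal. apply Cderiv_isd. apply isdC_mult; apply Hb. }
  set (dda := fun y => (- (Ci * lam * lam) * da y + (lam * Cderiv qh y * b y + lam * qh y * db y))%C).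
  set (ddb := fun y => (Ci * lam * lam * db y + (lam * Cderiv rh y * a y + lam * rh y * da y))%C).
  assert (Da : forall y, isdC da y (dda y)).
  { intros y. unfold da. eapply isdC_eq.
    apply isdC_plus. apply isdC_cmul, Ha. apply isdC_mult. apply isdC_cmul, Hq. apply Hb.
    unfold dda, da, db. ring. }
  assert (Db : forall y, isdC db y (ddb y)).
  { intros y. unfold db. eapply isdC_eq.
    apply isdC_plus. apply isdC_cmul, Hb. apply isdC_mult. apply isdC_cmul, Hr. apply Ha.
    unfold ddb, da, db. ring. }
  assert (D1 : forall y, isdC w1 y (dda y * a y + da y * da y + (da y * da y + a y * dda y))%C).
  { intros y. eapply isdC_ext. intros z; symmetry; apply W1.
    apply isdC_plus; apply isdC_mult; auto. }
  assert (D2 : forall y, isdC w2 y (- (ddb y * b y + db y * db y + (db y * db y + b y * ddb y)))%C).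
  { intros y. eapply isdC_ext. intros z; symmetry; apply W2.
    apply isdC_opp. apply isdC_plus; apply isdC_mult; auto. }
  assert (Cv1 : conv_minus (fun y => rh y * w1 y)%C).
  { intros x. apply exgen_m'.
    - intros y. eexists. apply isdC_mult. apply Hr. apply D1.
    - exists (K * (2 * ((Cmod (- (Ci * lam * lam)) * B + Cmod lam * Rabs K * B) * B))).
      eapply filter_imp. 2: exact (filter_and _ _ (filter_and _ _ HK HB) (minf_lt (-1))).
      intros y [[[Q1 Q2] [A1 A2]] Hy].
      apply bound_prod. nra. exact Q2.
      rewrite W1. unfold da. apply bnd_w; auto. apply (small_bd _ K y). nra. exact Q1. }
  assert (Cv2 : conv_minus (fun y => qh y * w2 y)%C).
  { intros x. apply exgen_m'.
    - intros y. eexists. apply isdC_mult. apply Hq. apply D2.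
    - exists (K * (2 * ((Cmod (Ci * lam * lam) * B + Cmod lam * Rabs K * B) * B))).
      eapply filter_imp. 2: exact (filter_and _ _ (filter_and _ _ HK HB) (minf_lt (-1))).
      intros y [[[Q1 Q2] [A1 A2]] Hy].
      apply bound_prod. nra. exact Q1.
      rewrite W2, Cmod_opp. unfold db. apply bnd_w; auto. apply (small_bd _ K y). nra. exact Q2. }
  set (c := (- (Ci * lam + Ci * lam))%C).
  set (F := fun y => (c * (a y * b y))%C).
  assert (DF : forall y, isdC F y (rh y * w1 y + qh y * w2 y)%C).
  { intros y. unfold F. eapply isdC_eq. apply isdC_cmul. apply isdC_mult; auto.
    rewrite W1, W2. unfold c, da, db. Cring2. }
  assert (Dg : forall y, isdC (fun y => rh y * w1 y + qh y * w2 y)%C y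
             ((Cderiv rh y * w1 y + rh y * (dda y * a y + da y * da y + (da y * da y + a y * dda y))) +
              (Cderiv qh y * w2 y + qh y * (- (ddb y * b y + db y * db y + (db y * db y + b y * ddb y)))))%C).
  { intros y. apply isdC_plus; apply isdC_mult; auto. }
  assert (HS : forall x u, @is_RInt C_R_NormedModule (fun y => rh y * w1 y + qh y * w2 y)%C u x (minus (F x) (F u))).
  { intros x u. apply (is_RInt_derive (V:=C_R_CompleteNormedModule) F).
    - intros z _. apply DF.
    - intros z _. apply (ex_derive_continuous (K:=R_AbsRing) (V:=C_R_NormedModule)).
      eexists. apply Dg. }
  assert (HG : forall x, @is_RInt_gen C_R_NormedModule (fun y => rh y * w1 y + qh y * w2 y)%C minf (at_point x) (F x)).
  { intros x. apply (RIntgen_of_lim_m _ x (fun u => minus (F x) (F u))). apply HS.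
    apply Cto0_loc_l. exact _.
    pose proof (Cto0_cmul _ minf _ (- c)%C Hab) as A.
    intros eps He. eapply filter_imp. 2: exact (A eps He). intros y. simpl.
    replace (minus (F x) (F y) - F x)%C with (- c * (a y * b y))%C. auto.
    unfold F, minus, plus, opp; simpl. Cring2. }
  assert (Hsum : forall x, (int_minus (fun y => rh y * w1 y)%C x + int_minus (fun y => qh y * w2 y)%C x = F x)%C).
  { intros x.
    pose proof (RInt_gen_correct (V:=C_R_CompleteNormedModule) _ (Cv1 x)) as I1.
    pose proof (RInt_gen_correct (V:=C_R_CompleteNormedModule) _ (Cv2 x)) as I2.
    pose proof (is_RInt_gen_plus _ _ _ _ I1 I2) as I3.
    pose proof (is_RInt_gen_unique (V:=C_R_CompleteNormedModule) _ _ I3) as U1.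
    pose proof (is_RInt_gen_unique (V:=C_R_CompleteNormedModule) _ _ (HG x)) as U2.
    unfold int_minus. rewrite <- U2. symmetry. exact U1. }
  split; [exact Cv1|]. split; [exact Cv2|]. split.
  { intros x. split; eexists; [apply D1 | apply D2]. }
  intros x.
  pose proof (Hsum x) as Hx.
  set (I1 := int_minus (fun y => rh y * w1 y)%C x) in *.
  set (I2 := int_minus (fun y => qh y * w2 y)%C x) in *.
  assert (E2 : @eq C I2 (F x - I1)%C) by (rewrite <- Hx; Cring2).
  split.
  - unfold L_op1. fold I1 I2. rewrite (Cderiv_isd _ _ _ (D1 x)). rewrite E2, W1, W2.
    apply half_lem. unfold dda, ddb, F, c, da, db. Cring2.
  - unfold L_op2. fold I1 I2. rewrite (Cderiv_isd _ _ _ (D2 x)). rewrite E2, W1, W2.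
    apply half_lem. unfold dda, ddb, F, c, da, db. Cring2.
Qed.


Lemma pinf_gt (c : R) : pinf (fun y => c < y).
Proof. exists c. auto. Qed.

Lemma core_Lt (lam : C) (qh rh a b : R -> C) :
  (forall x, isdC qh x (Cderiv qh x)) ->
  (forall x, isdC rh x (Cderiv rh x)) ->
  (forall x, isdC a x (- (Ci * lam * lam) * a x + lam * qh x * b x)%C) ->
  (forall x, isdC b x (Ci * lam * lam * b x + lam * rh x * a x)%C) ->
  (exists K, pinf (fun y => Cmod (qh y) <= K / (y * y) /\ Cmod (rh y) <= K / (y * y))) ->
  (exists B, pinf (fun y => Cmod (a y) <= B /\ Cmod (b y) <= B)) ->
  Cto0 (fun y => a y * b y)%C pinf ->
  Lt_eigen qh rh lam (s3dx1 (fun x => b x * b x)%C) (s3dx2 (fun x => - (a x * a x))%C).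
Proof.
  intros Hq Hr Ha Hb [K HK] [B HB] Hab.
  set (da := fun y => (- (Ci * lam * lam) * a y + lam * qh y * b y)%C).
  set (db := fun y => (Ci * lam * lam * b y + lam * rh y * a y)%C).
  set (w1 := s3dx1 (fun x => b x * b x)%C).
  set (w2 := s3dx2 (fun x => - (a x * a x))%C).
  assert (W1 : forall y, w1 y = (db y * b y + b y * db y)%C).
  { intros y. unfold w1, s3dx1. apply Cderiv_isd. apply isdC_mult; apply Hb. }
  assert (W2 : forall y, w2 y = (- - (da y * a y + a y * da y))%C).
  { intros y. unfold w2, s3dx2. f_equal. apply Cderiv_isd. apply isdC_opp, isdC_mult; apply Ha. }
  set (dda := fun y => (- (Ci * lam * lam) * da y + (lam * Cderiv qh y * b y + lam * qh y * db y))%C).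
  set (ddb := fun y => (Ci * lam * lam * db y + (lam * Cderiv rh y * a y + lam * rh y * da y))%C).
  assert (Da : forall y, isdC da y (dda y)).
  { intros y. unfold da. eapply isdC_eq.
    apply isdC_plus. apply isdC_cmul, Ha. apply isdC_mult. apply isdC_cmul, Hq. apply Hb.
    unfold dda, da, db. ring. }
  assert (Db : forall y, isdC db y (ddb y)).
  { intros y. unfold db. eapply isdC_eq.
    apply isdC_plus. apply isdC_cmul, Hb. apply isdC_mult. apply isdC_cmul, Hr. apply Ha.
    unfold ddb, da, db. ring. }
  assert (D1 : forall y, isdC w1 y (ddb y * b y + db y * db y + (db y * db y + b y * ddb y))%C).
  { intros y. eapply isdC_ext. intros z; symmetry; apply W1.
    apply isdC_plus; apply isdC_mult; auto. }
  assert (D2 : forall y, isdC w2 y (- - (dda y * a y + da y * da y + (da y * da y + a y * dda y)))%C).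
  { intros y. eapply isdC_ext. intros z; symmetry; apply W2.
    apply isdC_opp, isdC_opp. apply isdC_plus; apply isdC_mult; auto. }
  assert (Cv1 : conv_plus (fun y => qh y * w1 y)%C).
  { intros x. apply exgen_p'.
    - intros y. eexists. apply isdC_mult. apply Hq. apply D1.
    - exists (K * (2 * ((Cmod (Ci * lam * lam) * B + Cmod lam * Rabs K * B) * B))).
      eapply filter_imp. 2: exact (filter_and _ _ (filter_and _ _ HK HB) (pinf_gt 1)).
      intros y [[[Q1 Q2] [A1 A2]] Hy].
      apply bound_prod. nra. exact Q1.
      rewrite W1. unfold db. apply bnd_w; auto. apply (small_bd _ K y). nra. exact Q2. }
  assert (Cv2 : conv_plus (fun y => rh y * w2 y)%C).
  { intros x. apply exgen_p'.
    - intros y. eexists. apply isdC_mult. apply Hr. apply D2.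
    - exists (K * (2 * ((Cmod (- (Ci * lam * lam)) * B + Cmod lam * Rabs K * B) * B))).
      eapply filter_imp. 2: exact (filter_and _ _ (filter_and _ _ HK HB) (pinf_gt 1)).
      intros y [[[Q1 Q2] [A1 A2]] Hy].
      apply bound_prod. nra. exact Q2.
      rewrite W2, (Cmod_opp (- _)), Cmod_opp. unfold da. apply bnd_w; auto. apply (small_bd _ K y). nra. exact Q1. }
  set (c := (Ci * lam + Ci * lam)%C).
  set (F := fun y => (c * (a y * b y))%C).
  assert (DF : forall y, isdC F y (qh y * w1 y - rh y * w2 y)%C).
  { intros y. unfold F. eapply isdC_eq. apply isdC_cmul. apply isdC_mult; auto.
    rewrite W1, W2. unfold c, da, db. Cring2. }
  assert (Dg : forall y, isdC (fun y => qh y * w1 y - rh y * w2 y)%C y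
             ((Cderiv qh y * w1 y + qh y * (ddb y * b y + db y * db y + (db y * db y + b y * ddb y))) -
              (Cderiv rh y * w2 y + rh y * (- - (dda y * a y + da y * da y + (da y * da y + a y * dda y)))))%C).
  { intros y. apply isdC_minus; apply isdC_mult; auto. }
  assert (HS : forall x u, @is_RInt C_R_NormedModule (fun y => qh y * w1 y - rh y * w2 y)%C x u (minus (F u) (F x))).
  { intros x u. apply (is_RInt_derive (V:=C_R_CompleteNormedModule) F).
    - intros z _. apply DF.
    - intros z _. apply (ex_derive_continuous (K:=R_AbsRing) (V:=C_R_NormedModule)).
      eexists. apply Dg. }
  assert (HG : forall x, @is_RInt_gen C_R_NormedModule (fun y => qh y * w1 y - rh y * w2 y)%C (at_point x) pinf (- F x)%C).
  { intros x. apply (RIntgen_of_lim_p _ x (fun u => minus (F u) (F x))). apply HS.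
    apply Cto0_loc_l. exact _.
    pose proof (Cto0_cmul _ pinf _ c Hab) as A.
    intros eps He. eapply filter_imp. 2: exact (A eps He). intros y. simpl.
    replace (minus (F y) (F x) - - F x)%C with (c * (a y * b y))%C. auto.
    unfold F, minus, plus, opp; simpl. Cring2. }
  assert (Hsum : forall x, (int_plus (fun y => qh y * w1 y)%C x - int_plus (fun y => rh y * w2 y)%C x = - F x)%C).
  { intros x.
    pose proof (RInt_gen_correct (V:=C_R_CompleteNormedModule) _ (Cv1 x)) as I1.
    pose proof (RInt_gen_correct (V:=C_R_CompleteNormedModule) _ (Cv2 x)) as I2.
    pose proof (is_RInt_gen_minus _ _ _ _ I1 I2) as I3.
    pose proof (is_RInt_gen_unique (V:=C_R_CompleteNormedModule) _ _ I3) as U1.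
    pose proof (is_RInt_gen_unique (V:=C_R_CompleteNormedModule) _ _ (HG x)) as U2.
    unfold int_plus. rewrite <- U2. symmetry. exact U1. }
  split; [exact Cv1|]. split; [exact Cv2|]. split.
  { intros x. split; eexists; [apply D1 | apply D2]. }
  intros x.
  pose proof (Hsum x) as Hx.
  set (I1 := int_plus (fun y => qh y * w1 y)%C x) in *.
  set (I2 := int_plus (fun y => rh y * w2 y)%C x) in *.
  assert (E2 : @eq C I2 (I1 + F x)%C).
  { replace (F x) with (- (- F x))%C by Cring2. rewrite <- Hx. Cring2. }
  split.
  - unfold Lt_op1. fold I1 I2. rewrite (Cderiv_isd _ _ _ (D1 x)). rewrite E2, W1, W2.
    apply half_lem. unfold dda, ddb, F, c, da, db. Cring2.
  - unfold Lt_op2. fold I1 I2. rewrite (Cderiv_isd _ _ _ (D2 x)). rewrite E2, W1, W2.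
    apply half_lem. unfold dda, ddb, F, c, da, db. Cring2.
Qed.


Lemma Re_phase (lam : C) (y : R) : Re (- (Ci * lam * lam * RtoC y))%C = 2 * Re lam * Im lam * y.
Proof. destruct lam as [p s]. unfold Ci, RtoC, Re, Im. simpl. ring. Qed.
Lemma Re_phase' (lam : C) (y : R) : Re (Ci * lam * lam * RtoC y)%C = - (2 * Re lam * Im lam * y).
Proof. destruct lam as [p s]. unfold Ci, RtoC, Re, Im. simpl. ring. Qed.

Lemma exp_le1 (t : R) : t <= 0 -> exp t <= 1.
Proof. intros H. rewrite <- exp_0. destruct H. left; apply exp_increasing; auto. subst; lra. Qed.

Lemma Dp_sign lam : D_plus lam \/ Sigma lam -> 0 <= Re lam * Im lam.
Proof. unfold D_plus, Sigma. intros [[[A B]|[A B]]|[A|A]]; try rewrite A; nra. Qed.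
Lemma Dm_sign lam : D_minus lam \/ Sigma lam -> Re lam * Im lam <= 0.
Proof. unfold D_minus, Sigma. intros [[[A B]|[A B]]|[A|A]]; try rewrite A; nra. Qed.

Definition jcons (a b : R -> C) F :=
  (exists B, F (fun y => Cmod (a y) <= B /\ Cmod (b y) <= B)) /\ Cto0 (fun y => a y * b y)%C F.

Lemma col1_minf qh lam a b : 0 <= Re lam * Im lam -> jost_col1 qh lam minf a b -> jcons a b minf.
Proof.
  intros S [_ [H1 H2]].
  apply (jost_cons a b (fun x => cexp (Ci * lam * lam * RtoC x)) (fun x => cexp (- (Ci * lam * lam * RtoC x)))
    minf _ (RtoC 1) H1 H2).
  - intros y. apply cexp_inv.
  - exists 0. intros y Hy. rewrite Cmod_cexp, Re_phase. apply exp_le1. nra.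
Qed.

Lemma col1_pinf qh lam a b : Re lam * Im lam <= 0 -> jost_col1 qh lam pinf a b -> jcons a b pinf.
Proof.
  intros S [_ [H1 H2]].
  apply (jost_cons a b (fun x => cexp (Ci * lam * lam * RtoC x)) (fun x => cexp (- (Ci * lam * lam * RtoC x)))
    pinf _ (RtoC 1) H1 H2).
  - intros y. apply cexp_inv.
  - exists 0. intros y Hy. rewrite Cmod_cexp, Re_phase. apply exp_le1. nra.
Qed.

Lemma jcons_swap a b F (FF : Filter F) : jcons b a F -> jcons a b F.
Proof.
  intros [[B HB] H]. split.
  - exists B. eapply filter_imp. 2: exact HB. intros y [A1 A2]; split; auto.
  - intros eps He. eapply filter_imp. 2: exact (H eps He). intros y. rewrite Cmult_comm. auto.
Qed.

Lemma col2_minf qh lam a b : Re lam * Im lam <= 0 -> jost_col2 qh lam minf a b -> jcons a b minf.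
Proof.
  intros S [_ [H1 H2]]. apply jcons_swap. exact _.
  apply (jost_cons b a (fun x => cexp (- (Ci * lam * lam * RtoC x))) (fun x => cexp (Ci * lam * lam * RtoC x))
    minf _ (RtoC 1) H2 H1).
  - intros y. apply cexp_inv'.
  - exists 0. intros y Hy. rewrite Cmod_cexp, Re_phase'. apply exp_le1. nra.
Qed.

Lemma col2_pinf qh lam a b : 0 <= Re lam * Im lam -> jost_col2 qh lam pinf a b -> jcons a b pinf.
Proof.
  intros S [_ [H1 H2]]. apply jcons_swap. exact _.
  apply (jost_cons b a (fun x => cexp (- (Ci * lam * lam * RtoC x))) (fun x => cexp (Ci * lam * lam * RtoC x))
    pinf _ (RtoC 1) H2 H1).
  - intros y. apply cexp_inv'.
  - exists 0. intros y Hy. rewrite Cmod_cexp, Re_phase'. apply exp_le1. nra.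
Qed.

Lemma decay_bd (D y M : R) : y <> 0 -> Rabs (y ^ 2 * D) <= M -> Rabs D <= M / (y * y).
Proof.
  intros Hy H. rewrite Rabs_mult in H. simpl in H. rewrite Rmult_1_r in H.
  rewrite Rabs_mult, <- Rabs_mult in H. rewrite (Rabs_pos_eq (y * y)) in H by nra.
  assert (0 < y * y) by (destruct (Rlt_or_le 0 y); nra).
  apply (Rmult_le_reg_l (y * y)); auto.
  replace (y * y * (M / (y * y))) with M by (field; auto). lra.
Qed.

Lemma reg_q (q : R -> C) : rapidly_decaying q ->
  (forall x, isdC (Cderiv q) x (Cderiv (Cderiv q) x)) /\
  (forall x, isdC (fun x => Cconj (Cderiv q x)) x (Cderiv (fun x => Cconj (Cderiv q x)) x)) /\
  (exists K, forall y, y <> 0 -> Cmod (Cderiv q y) <= K / (y * y) /\ Cmod (Cconj (Cderiv q y)) <= K / (y * y)).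
Proof.
  intros [Hd Hb].
  assert (Q : forall x, isdC (Cderiv q) x (Cderiv (Cderiv q) x)).
  { intros x. apply Cderiv_isd'.
    - exact (proj1 (Hd 2%nat x)).
    - exact (proj2 (Hd 2%nat x)). }
  split; [exact Q|]. split.
  - intros x.
    assert (R1 : isdC (fun x => Cconj (Cderiv q x)) x (Cconj (Cderiv (Cderiv q) x))).
    { pose proof (isdC_fst _ _ _ (Q x)) as A1. pose proof (isdC_snd _ _ _ (Q x)) as A2.
      apply isdC_pair; simpl.
      - exact A1.
      - exact (is_derive_opp _ x _ A2). }
    eapply isdC_eq. exact R1. symmetry. exact (Cderiv_isd _ _ _ R1).
  - destruct (Hb 1%nat 2%nat) as [M HM].
    exists (M + M). intros y Hy. rewrite Cmod_conj.
    destruct (HM y) as [B1 B2].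
    apply decay_bd in B1; auto. apply decay_bd in B2; auto.
    split; eapply Rle_trans; try apply Cmod_le_sum; simpl;
    (replace ((M + M) / (y * y)) with (M / (y * y) + M / (y * y)) by (field; auto));
    apply Rplus_le_compat; assumption.
Qed.


Theorem mainTheorem5
  (q : R -> C)
  (phim11 phim21 phim12 phim22 phip11 phip21 phip12 phip22 : C -> R -> C) :
  rapidly_decaying q ->
  let qh := Cderiv q in
  let rh := fun x => Cconj (Cderiv q x) in
  (forall lam, D_plus lam \/ Sigma lam ->
     jost_col1 qh lam minf (phim11 lam) (phim21 lam)) ->
  (forall lam, D_minus lam \/ Sigma lam ->
     jost_col2 qh lam minf (phim12 lam) (phim22 lam)) ->
  (forall lam, D_minus lam \/ Sigma lam ->
     jost_col1 qh lam pinf (phip11 lam) (phip21 lam)) ->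
  (forall lam, D_plus lam \/ Sigma lam ->
     jost_col2 qh lam pinf (phip12 lam) (phip22 lam)) ->
  (forall lam, D_plus lam \/ Sigma lam ->
     L_eigen qh rh lam
       (s3dx1 (fun x => phim11 lam x * phim11 lam x)%C)
       (s3dx2 (fun x => phim21 lam x * phim21 lam x)%C)) /\
  (forall lam, D_minus lam \/ Sigma lam ->
     L_eigen qh rh lam
       (s3dx1 (fun x => phim12 lam x * phim12 lam x)%C)
       (s3dx2 (fun x => phim22 lam x * phim22 lam x)%C)) /\
  (forall lam, D_minus lam \/ Sigma lam ->
     Lt_eigen qh rh lam
       (s3dx1 (fun x => phip21 lam x * phip21 lam x)%C)
       (s3dx2 (fun x => - (phip11 lam x * phip11 lam x))%C)) /\
  (forall lam, D_plus lam \/ Sigma lam ->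
     Lt_eigen qh rh lam
       (s3dx1 (fun x => phip22 lam x * phip22 lam x)%C)
       (s3dx2 (fun x => - (phip12 lam x * phip12 lam x))%C)).
Proof.
  intros Hq qh rh J1 J2 J3 J4.
  destruct (reg_q q Hq) as [Rq [Rr [K HK]]].
  assert (Km : exists K, minf (fun y => Cmod (qh y) <= K / (y * y) /\ Cmod (rh y) <= K / (y * y))).
  { exists K, 0. intros y Hy. apply HK. lra. }
  assert (Kp : exists K, pinf (fun y => Cmod (qh y) <= K / (y * y) /\ Cmod (rh y) <= K / (y * y))).
  { exists K, 0. intros y Hy. apply HK. lra. }
  split; [|split; [|split]]; intros lam Hl.
  - pose proof (J1 lam Hl) as J. destruct (col1_minf _ _ _ _ (Dp_sign lam Hl) J) as [Bd C0].
    destruct J as [ode _].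
    apply core_L; auto; intros x; apply (ode x).
  - pose proof (J2 lam Hl) as J. destruct (col2_minf _ _ _ _ (Dm_sign lam Hl) J) as [Bd C0].
    destruct J as [ode _].
    apply core_L; auto; intros x; apply (ode x).
  - pose proof (J3 lam Hl) as J. destruct (col1_pinf _ _ _ _ (Dm_sign lam Hl) J) as [Bd C0].
    destruct J as [ode _].
    apply core_Lt; auto; intros x; apply (ode x).
  - pose proof (J4 lam Hl) as J. destruct (col2_pinf _ _ _ _ (Dp_sign lam Hl) J) as [Bd C0].
    destruct J as [ode _].
    apply core_Lt; auto; intros x; apply (ode x).
Qed.
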